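(* If $\Delta;\Gamma\vdash M:A$ in DCC, then $\Gamma^\circ\vdash M^\circ:A^\circ$ in CC.
   Context: DCC: expressions $x\mid U_i\mid\Pi x{:}A.B\mid L@M\mid\ell_i\{\overline M\}$ (label names $\ell_i$, lists $\overline M$); type contexts $\Gamma::=\cdot\mid\Gamma,x{:}A$; label contexts $\Delta::=\cdot\mid\Delta,\ell_i(\{\overline x{:}\overline A\},x{:}A\mapsto L:B)$; substitution with $\ell\{\overline M\}[N/x]=\ell\{\overline{M[N/x]}\}$; reduction $\Delta\vdash\ell\{\overline M\}@N\triangleright L[\overline M/\overline x,N/x]$ for $\ell(\{\overline x{:}\overline A\},x{:}A\mapsto L:B)\in\Delta$; equivalence $\Delta\vdash M\equiv N$: common reduct, or $\Delta\vdash L\triangleright^*\ell\{\overline N\}$, $\Delta\vdash M\triangleright^*M'$, $\ell(\{\overline x{:}\overline A\},x{:}A\mapsto N:B)\in\Delta$, $\Delta\vdash N[\overline N/\overline x]\equiv M'@x$ give $\Delta\vdash L\equiv M$, and symmetrically. Typing/formation (mutual): variables from a well-formed context, $U_i:U_{i+1}$, $\Pi x{:}A.B:U_{\max(i,j)}$, $M@N:B[N/x]$ for $M:\Pi x{:}A.B$, $N:A$, conversion along $\equiv$ to a type $B:U_i$, and: if $\vdash\Delta;\Gamma$, $\ell(\{\overline x{:}\overline A\},x{:}A\mapsto M:B)\in\Delta$, $|\overline M|=|\overline x|$, $\Delta;\Gamma\vdash M_k:A_k[M_1/x_1,\dots,M_{k-1}/x_{k-1}]$ for all $k$, then $\Delta;\Gamma\vdash\ell\{\overline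 M\}:\Pi x{:}A[\overline M/\overline x].B[\overline M/\overline x]$; $\vdash\cdot;\cdot$; fresh label entries may be added when $\Delta;\overline x{:}\overline A\vdash\Pi x{:}A.B:U_i$ and $\Delta;\overline x{:}\overline A,x{:}A\vdash M:B$; $\vdash\Delta;\Gamma,\Delta;\Gamma\vdash A:U_i\Rightarrow\vdash\Delta;\Gamma,x{:}A$. CC: expressions $x\mid U_i\mid\Pi x{:}A.B\mid L\,M\mid\lambda x{:}A.M$ with standard typing rules (variable, $U_i:U_{i+1}$, $\Pi$ in $U_{\max(i,j)}$, $M\,N:B[N/x]$, $\lambda x{:}A.M:\Pi x{:}A.B$ for $M:B$ under $x{:}A$, conversion along $\beta\eta$-equivalence). Backward transformation (relative to $\Delta$, on well-typed terms): $x^\circ=x$, $U_i^\circ=U_i$, $(\Pi x{:}A.B)^\circ=\Pi x{:}A^\circ.B^\circ$, $(M@N)^\circ=M^\circ\,N^\circ$, $(\ell\{\overline M\})^\circ=\lambda x{:}A^\circ[\overline{M^\circ}/\overline x].\,L^\circ[\overline{M^\circ}/\overline x]$ where $\ell(\{\overline x{:}\overline A\},x{:}A\mapsto L:B)\in\Delta$; pointwise on type contexts: $(\Gamma,x{:}A)^\circ=\Gamma^\circ,x{:}A^\circ$. *)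

(* Defs.v *)
(* Variables are de Bruijn
   indices (index 0 = most recently bound variable); contexts are lists whose
   head is the most recent entry. *)
From Stdlib Require Import List Arith Relations.
Import ListNotations.

Definition uprn (xi : nat -> nat) : nat -> nat :=
  fun n => match n with 0 => 0 | S k => S (xi k) end.

Inductive dterm : Type :=
| DVar  : nat -> dterm
| DUniv : nat -> dterm
| DPi   : dterm -> dterm -> dterm
| DApp  : dterm -> dterm -> dterm
| DLab  : nat -> list dterm -> dterm.

Fixpoint dren (xi : nat -> nat) (t : dterm) : dterm :=
  match t with
  | DVar n => DVar (xi n)
  | DUniv i => DUniv i
  | DPi A B => DPi (dren xi A) (dren (uprn xi) B)
  | DApp M N => DApp (dren xi M) (dren xi N)
  | DLab l Ms => DLab l (map (dren xi) Ms)
  end.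

Definition dup (s : nat -> dterm) : nat -> dterm :=
  fun n => match n with 0 => DVar 0 | S k => dren S (s k) end.

Fixpoint dsubst (s : nat -> dterm) (t : dterm) : dterm :=
  match t with
  | DVar n => s n
  | DUniv i => DUniv i
  | DPi A B => DPi (dsubst s A) (dsubst (dup s) B)
  | DApp M N => DApp (dsubst s M) (dsubst s N)
  | DLab l Ms => DLab l (map (dsubst s) Ms)
  end.

Definition dsubst1 (N : dterm) (t : dterm) : dterm :=
  dsubst (fun n => match n with 0 => N | S k => DVar k end) t.

(* simultaneous instantiation t[M1/x1,...,Mn/xn] for t in context
   x1,...,xn (xn = index 0); Ms = [M1; ...; Mn] *)
Definition dinst_sub (Ms : list dterm) : nat -> dterm :=
  fun j => nth j (rev Ms) (DVar (j - length Ms)).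
Definition dinst (Ms : list dterm) (t : dterm) : dterm := dsubst (dinst_sub Ms) t.

(* label entry  l({x1:A1,...,xn:An}, x:A |-> L : B);
   A_k lives in context x1..x_{k-1}; A in x1..xn; L, B in x1..xn,x *)
Record lentry : Type := LEntry {
  lname   : nat;
  lparams : list dterm;   (* [A1; ...; An] *)
  ldom    : dterm;
  lbody   : dterm;
  lcod    : dterm
}.

Definition lctx := list lentry.
Definition dctx := list dterm.

Inductive dstep (D : lctx) : dterm -> dterm -> Prop :=
| dstep_lab : forall e Ms N,
    In e D -> length Ms = length (lparams e) ->
    dstep D (DApp (DLab (lname e) Ms) N) (dinst (Ms ++ [N]) (lbody e))
| dstep_pil : forall A A' B, dstep D A A' -> dstep D (DPi A B) (DPi A' B)
| dstep_pir : forall A B B', dstep D B B' -> dstep D (DPi A B) (DPi A B')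
| dstep_appl : forall M M' N, dstep D M M' -> dstep D (DApp M N) (DApp M' N)
| dstep_appr : forall M N N', dstep D N N' -> dstep D (DApp M N) (DApp M N')
| dstep_lab_arg : forall l Ms1 M M' Ms2, dstep D M M' ->
    dstep D (DLab l (Ms1 ++ M :: Ms2)) (DLab l (Ms1 ++ M' :: Ms2)).

Definition dred (D : lctx) : dterm -> dterm -> Prop := clos_refl_trans _ (dstep D).

Inductive deq (D : lctx) : dterm -> dterm -> Prop :=
| deq_common : forall M N P, dred D M P -> dred D N P -> deq D M N
| deq_etal : forall L M M' e Ns,
    dred D L (DLab (lname e) Ns) -> dred D M M' -> In e D ->
    deq D (dsubst (dup (dinst_sub Ns)) (lbody e)) (DApp (dren S M') (DVar 0)) ->
    deq D L M
| deq_etar : forall L M M' e Ns,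
    dred D L (DLab (lname e) Ns) -> dred D M M' -> In e D ->
    deq D (dsubst (dup (dinst_sub Ns)) (lbody e)) (DApp (dren S M') (DVar 0)) ->
    deq D M L.

Inductive dwf : lctx -> dctx -> Prop :=
| dwf_empty : dwf [] []
| dwf_label : forall D e i,
    ~ (exists e', In e' D /\ lname e' = lname e) ->
    dtyping D (rev (lparams e)) (DPi (ldom e) (lcod e)) (DUniv i) ->
    dtyping D (ldom e :: rev (lparams e)) (lbody e) (lcod e) ->
    dwf (e :: D) []
| dwf_ext : forall D G A i,
    dwf D G -> dtyping D G A (DUniv i) -> dwf D (A :: G)
with dtyping : lctx -> dctx -> dterm -> dterm -> Prop :=
| dty_var : forall D G n A,
    dwf D G -> nth_error G n = Some A ->
    dtyping D G (DVar n) (dren (fun k => S n + k) A)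
| dty_univ : forall D G i, dwf D G -> dtyping D G (DUniv i) (DUniv (S i))
| dty_pi : forall D G A B i j,
    dtyping D G A (DUniv i) -> dtyping D (A :: G) B (DUniv j) ->
    dtyping D G (DPi A B) (DUniv (Nat.max i j))
| dty_app : forall D G M N A B,
    dtyping D G M (DPi A B) -> dtyping D G N A ->
    dtyping D G (DApp M N) (dsubst1 N B)
| dty_conv : forall D G M A B i,
    dtyping D G M A -> deq D A B -> dtyping D G B (DUniv i) ->
    dtyping D G M B
| dty_lab : forall D G e Ms,
    dwf D G -> In e D ->
    length Ms = length (lparams e) ->
    (forall k, k < length Ms ->
       dtyping D G (nth k Ms (DVar 0))
               (dinst (firstn k Ms) (nth k (lparams e) (DVar 0)))) ->
    dtyping D G (DLab (lname e) Ms) (dinst Ms (DPi (ldom e) (lcod e))).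

Inductive cterm : Type :=
| CVar  : nat -> cterm
| CUniv : nat -> cterm
| CPi   : cterm -> cterm -> cterm
| CApp  : cterm -> cterm -> cterm
| CLam  : cterm -> cterm -> cterm.

Fixpoint cren (xi : nat -> nat) (t : cterm) : cterm :=
  match t with
  | CVar n => CVar (xi n)
  | CUniv i => CUniv i
  | CPi A B => CPi (cren xi A) (cren (uprn xi) B)
  | CApp M N => CApp (cren xi M) (cren xi N)
  | CLam A M => CLam (cren xi A) (cren (uprn xi) M)
  end.

Definition cup (s : nat -> cterm) : nat -> cterm :=
  fun n => match n with 0 => CVar 0 | S k => cren S (s k) end.

Fixpoint csubst (s : nat -> cterm) (t : cterm) : cterm :=
  match t with
  | CVar n => s n
  | CUniv i => CUniv i
  | CPi A B => CPi (csubst s A) (csubst (cup s) B)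
  | CApp M N => CApp (csubst s M) (csubst s N)
  | CLam A M => CLam (csubst s A) (csubst (cup s) M)
  end.

Definition csubst1 (N : cterm) (t : cterm) : cterm :=
  csubst (fun n => match n with 0 => N | S k => CVar k end) t.

Definition cinst_sub (Ms : list cterm) : nat -> cterm :=
  fun j => nth j (rev Ms) (CVar (j - length Ms)).

Definition cctx := list cterm.

Inductive cstep : cterm -> cterm -> Prop :=
| cstep_beta : forall A M N, cstep (CApp (CLam A M) N) (csubst1 N M)
| cstep_eta : forall A M, cstep (CLam A (CApp (cren S M) (CVar 0))) M
| cstep_pil : forall A A' B, cstep A A' -> cstep (CPi A B) (CPi A' B)
| cstep_pir : forall A B B', cstep B B' -> cstep (CPi A B) (CPi A B')
| cstep_appl : forall M M' N, cstep M M' -> cstep (CApp M N) (CApp M' N)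
| cstep_appr : forall M N N', cstep N N' -> cstep (CApp M N) (CApp M N')
| cstep_laml : forall A A' M, cstep A A' -> cstep (CLam A M) (CLam A' M)
| cstep_lamr : forall A M M', cstep M M' -> cstep (CLam A M) (CLam A M').

Definition cconv : cterm -> cterm -> Prop := clos_refl_sym_trans _ cstep.

Inductive cwf : cctx -> Prop :=
| cwf_empty : cwf []
| cwf_ext : forall G A i, cwf G -> ctyping G A (CUniv i) -> cwf (A :: G)
with ctyping : cctx -> cterm -> cterm -> Prop :=
| cty_var : forall G n A,
    cwf G -> nth_error G n = Some A ->
    ctyping G (CVar n) (cren (fun k => S n + k) A)
| cty_univ : forall G i, cwf G -> ctyping G (CUniv i) (CUniv (S i))
| cty_pi : forall G A B i j,
    ctyping G A (CUniv i) -> ctyping (A :: G) B (CUniv j) ->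
    ctyping G (CPi A B) (CUniv (Nat.max i j))
| cty_app : forall G M N A B,
    ctyping G M (CPi A B) -> ctyping G N A ->
    ctyping G (CApp M N) (csubst1 N B)
| cty_lam : forall G A M B,
    ctyping (A :: G) M B -> ctyping G (CLam A M) (CPi A B)
| cty_conv : forall G M A B i,
    ctyping G M A -> cconv A B -> ctyping G B (CUniv i) ->
    ctyping G M B.

(* Backward transformation.  A translation table holds, for each label
   entry, its name, the translated domain A° and the translated body L°. *)
Definition ttable := list (nat * cterm * cterm).

Fixpoint tlookup (l : nat) (T : ttable) : option (cterm * cterm) :=
  match T with
  | [] => None
  | (l', A, L) :: T' => if Nat.eqb l l' then Some (A, L) else tlookup l T'
  end.

Fixpoint btrans (T : ttable) (t : dterm) : cterm :=
  match t with
  | DVar n => CVar n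
  | DUniv i => CUniv i
  | DPi A B => CPi (btrans T A) (btrans T B)
  | DApp M N => CApp (btrans T M) (btrans T N)
  | DLab l Ms =>
      match tlookup l T with
      | Some (A, L) =>
          csubst (cinst_sub (map (btrans T) Ms)) (CLam A L)
      | None => CUniv 0   (* never happens for well-typed terms *)
      end
  end.

Fixpoint btable (D : lctx) : ttable :=
  match D with
  | [] => []
  | e :: D' => let T := btable D' in
               (lname e, btrans T (ldom e), btrans T (lbody e)) :: T
  end.

Definition bterm (D : lctx) (M : dterm) : cterm := btrans (btable D) M.
Definition bctx (D : lctx) (G : dctx) : cctx := map (bterm D) G.

(* Main.v *)
Require Import Defs.
From Stdlib Require Import List Arith Lia Relations.
Import ListNotations.

Lemma uprn_ext f g : (forall n, f n = g n) -> forall n, uprn f n = uprn g n.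
Proof. intros H [|n]; simpl; auto. Qed.

Lemma cren_ext : forall t f g, (forall n, f n = g n) -> cren f t = cren g t.
Proof. induction t; simpl; intros f g H; f_equal; eauto using uprn_ext. Qed.

Lemma cren_comp : forall t f g, cren f (cren g t) = cren (fun n => f (g n)) t.
Proof.
  induction t; simpl; intros f g; f_equal; eauto;
  try (rewrite IHt2; apply cren_ext; intros [|n]; reflexivity).
Qed.

Lemma cup_ext s r : (forall n, s n = r n) -> forall n, cup s n = cup r n.
Proof. intros H [|n]; simpl; f_equal; auto. Qed.

Lemma csubst_ext : forall t s r, (forall n, s n = r n) -> csubst s t = csubst r t.
Proof. induction t; simpl; intros s r H; f_equal; eauto using cup_ext. Qed.

Lemma csubst_cren : forall t s f, csubst s (cren f t) = csubst (fun n => s (f n)) t.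
Proof.
  induction t; simpl; intros s f; f_equal; eauto;
  try (rewrite IHt2; apply csubst_ext; intros [|n]; reflexivity).
Qed.

Lemma cren_csubst : forall t s f, cren f (csubst s t) = csubst (fun n => cren f (s n)) t.
Proof.
  induction t; simpl; intros s f; f_equal; eauto;
  try (rewrite IHt2; apply csubst_ext; intros [|n]; simpl; auto;
       rewrite !cren_comp; apply cren_ext; reflexivity).
Qed.

Lemma csubst_comp : forall t s r, csubst r (csubst s t) = csubst (fun n => csubst r (s n)) t.
Proof.
  induction t; simpl; intros s r; f_equal; eauto;
  try (rewrite IHt2; apply csubst_ext; intros [|n]; simpl; auto;
       rewrite csubst_cren, cren_csubst; apply csubst_ext; reflexivity).
Qed.

Lemma csubst_id : forall t s, (forall n, s n = CVar n) -> csubst s t = t.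
Proof.
  induction t; simpl; intros s H; f_equal; eauto;
  try (apply IHt2; intros [|n]; simpl; auto; rewrite H; reflexivity).
Qed.

Fixpoint cclosed (n : nat) (t : cterm) : Prop :=
  match t with
  | CVar k => k < n
  | CUniv _ => True
  | CPi A B => cclosed n A /\ cclosed (S n) B
  | CApp M N => cclosed n M /\ cclosed n N
  | CLam A M => cclosed n A /\ cclosed (S n) M
  end.

Lemma csubst_ext_cl : forall t n s r, cclosed n t -> (forall k, k < n -> s k = r k) ->
  csubst s t = csubst r t.
Proof.
  induction t; simpl; intros m s r Hc H; try tauto; try (f_equal; intuition eauto; fail);
  f_equal; destruct Hc; eauto;
  (eapply IHt2; [eassumption|]; intros [|k] Hk; simpl; auto; f_equal; apply H; lia).
Qed.

Lemma cclosed_ren : forall t n m f, cclosed n t -> (forall k, k < n -> f k < m) ->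
  cclosed m (cren f t).
Proof.
  induction t; simpl; intros n' m f Hc H; intuition eauto;
  (eapply IHt2; [eassumption|]; intros [|k] Hk; simpl; try lia; specialize (H k); lia).
Qed.

Lemma cclosed_subst : forall t n m s, cclosed n t -> (forall k, k < n -> cclosed m (s k)) ->
  cclosed m (csubst s t).
Proof.
  induction t; simpl; intros n' m s Hc H; intuition eauto;
  (eapply IHt2; [eassumption|]; intros [|k] Hk; simpl; try lia;
   eapply cclosed_ren; [apply H; lia| intros; lia]).
Qed.

Definition s1 (N : cterm) : nat -> cterm := fun n => match n with 0 => N | S k => CVar k end.

Lemma cren_csubst1 N t f : cren f (csubst1 N t) = csubst1 (cren f N) (cren (uprn f) t).
Proof.
  unfold csubst1. rewrite cren_csubst, csubst_cren. apply csubst_ext. intros [|n]; reflexivity.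
Qed.

Lemma csubst_csubst1 N t s : csubst s (csubst1 N t) = csubst1 (csubst s N) (csubst (cup s) t).
Proof.
  unfold csubst1. rewrite !csubst_comp. apply csubst_ext. intros [|n]; simpl; auto.
  rewrite csubst_cren. symmetry. apply csubst_id. reflexivity.
Qed.

Lemma cstep_ren : forall t u, cstep t u -> forall f, cstep (cren f t) (cren f u).
Proof.
  induction 1; intros f; simpl; try (constructor; auto; fail).
  - rewrite cren_csubst1. constructor.
  - replace (cren (uprn f) (cren S M)) with (cren S (cren f M)).
    + constructor.
    + rewrite !cren_comp. apply cren_ext. reflexivity.
Qed.

Lemma cstep_subst : forall t u, cstep t u -> forall s, cstep (csubst s t) (csubst s u).
Proof.
  induction 1; intros s; simpl; try (constructor; auto; fail).
  - rewrite csubst_csubst1. constructor.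
  - replace (csubst (cup s) (cren S M)) with (cren S (csubst s M)).
    + constructor.
    + rewrite csubst_cren, cren_csubst. apply csubst_ext. reflexivity.
Qed.

Lemma cconv_map (g : cterm -> cterm) : (forall a b, cstep a b -> cstep (g a) (g b)) ->
  forall a b, cconv a b -> cconv (g a) (g b).
Proof.
  intros H a b C. induction C.
  - apply rst_step. auto.
  - apply rst_refl.
  - apply rst_sym. auto.
  - eapply rst_trans; eauto.
Qed.

Lemma cconv_refl a : cconv a a. Proof. apply rst_refl. Qed.
Lemma cconv_sym a b : cconv a b -> cconv b a. Proof. apply rst_sym. Qed.
Lemma cconv_trans a b c : cconv a b -> cconv b c -> cconv a c. Proof. apply rst_trans. Qed.
Lemma cconv_step a b : cstep a b -> cconv a b. Proof. apply rst_step. Qed.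

Lemma cconv_pi A A' B B' : cconv A A' -> cconv B B' -> cconv (CPi A B) (CPi A' B').
Proof.
  intros H1 H2. eapply cconv_trans.
  - apply (cconv_map (fun x => CPi x B)); [intros; constructor; auto| exact H1].
  - apply (cconv_map (fun x => CPi A' x)); [intros; constructor; auto| exact H2].
Qed.
Lemma cconv_app A A' B B' : cconv A A' -> cconv B B' -> cconv (CApp A B) (CApp A' B').
Proof.
  intros H1 H2. eapply cconv_trans.
  - apply (cconv_map (fun x => CApp x B)); [intros; constructor; auto| exact H1].
  - apply (cconv_map (fun x => CApp A' x)); [intros; constructor; auto| exact H2].
Qed.
Lemma cconv_lam A A' B B' : cconv A A' -> cconv B B' -> cconv (CLam A B) (CLam A' B').
Proof.
  intros H1 H2. eapply cconv_trans.
  - apply (cconv_map (fun x => CLam x B)); [intros; constructor; auto| exact H1].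
  - apply (cconv_map (fun x => CLam A' x)); [intros; constructor; auto| exact H2].
Qed.

Lemma cconv_ren f a b : cconv a b -> cconv (cren f a) (cren f b).
Proof. apply cconv_map. intros; apply cstep_ren; auto. Qed.
Lemma cconv_subst s a b : cconv a b -> cconv (csubst s a) (csubst s b).
Proof. apply cconv_map. intros; apply cstep_subst; auto. Qed.

Lemma cconv_subst_pw : forall t s r, (forall n, cconv (s n) (r n)) -> cconv (csubst s t) (csubst r t).
Proof.
  induction t; simpl; intros s r H; auto using cconv_refl, cconv_pi, cconv_app, cconv_lam;
  [apply cconv_pi|apply cconv_lam]; auto; apply IHt2; intros [|n]; simpl; auto using cconv_refl, cconv_ren.
Qed.

Inductive cwf2 : cctx -> Prop :=
| cwf2_empty : cwf2 []
| cwf2_ext : forall G A i, cwf2 G -> ctyping2 G A (CUniv i) -> cwf2 (A :: G)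
with ctyping2 : cctx -> cterm -> cterm -> Prop :=
| cty2_var : forall G n A,
    cwf2 G -> nth_error G n = Some A ->
    ctyping2 G (CVar n) (cren (fun k => S n + k) A)
| cty2_univ : forall G i, cwf2 G -> ctyping2 G (CUniv i) (CUniv (S i))
| cty2_pi : forall G A B i j,
    ctyping2 G A (CUniv i) -> ctyping2 (A :: G) B (CUniv j) ->
    ctyping2 G (CPi A B) (CUniv (Nat.max i j))
| cty2_app : forall G M N A B,
    ctyping2 G M (CPi A B) -> ctyping2 G N A ->
    ctyping2 G (CApp M N) (csubst1 N B)
| cty2_lam : forall G A M B i,
    ctyping2 G A (CUniv i) ->
    ctyping2 (A :: G) M B -> ctyping2 G (CLam A M) (CPi A B)
| cty2_conv : forall G M A B i,
    ctyping2 G M A -> cconv A B -> ctyping2 G B (CUniv i) ->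
    ctyping2 G M B.

Scheme cwf_mut := Induction for cwf Sort Prop
with ctyping_mut := Induction for ctyping Sort Prop.
Combined Scheme cwf_ctyping_mut from cwf_mut, ctyping_mut.

Lemma ty2_wf : forall G t T, ctyping2 G t T -> cwf2 G.
Proof. induction 1; auto. Qed.

Lemma to2 : (forall G, cwf G -> cwf2 G) /\ (forall G t T, ctyping G t T -> ctyping2 G t T).
Proof.
  apply (cwf_ctyping_mut (fun G _ => cwf2 G) (fun G t T _ => ctyping2 G t T));
  intros; try (econstructor; eauto; fail).
  pose proof (ty2_wf _ _ _ H). inversion H0; subst. econstructor; eauto.
Qed.

Lemma ty_wf : forall G t T, ctyping G t T -> cwf G.
Proof. induction 1; auto. inversion IHctyping; auto. Qed.

Definition wren (G' : cctx) (f : nat -> nat) (G : cctx) :=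
  forall n A, nth_error G n = Some A -> exists A', nth_error G' (f n) = Some A' /\
    cren (fun k => S (f n) + k) A' = cren f (cren (fun k => S n + k) A).

Lemma wren_up G' f G A : wren G' f G -> wren (cren f A :: G') (uprn f) (A :: G).
Proof.
  intros H [|n] B Hn; simpl in *.
  - inversion Hn; subst. eexists; split; [reflexivity|].
    rewrite !cren_comp. apply cren_ext. reflexivity.
  - destruct (H n B Hn) as [A' [H1 H2]]. exists A'. split; auto.
    transitivity (cren S (cren (fun k => S (f n) + k) A')).
    + rewrite cren_comp. apply cren_ext. reflexivity.
    + rewrite H2. rewrite !cren_comp. apply cren_ext. reflexivity.
Qed.

Lemma ren_typ : forall G t T, ctyping2 G t T -> forall G' f, cwf G' -> wren G' f G ->
  ctyping G' (cren f t) (cren f T).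
Proof.
  induction 1; intros G' f Hw Hr; [|simpl..].
  - destruct (Hr n A H0) as [A' [H1 H2]]. rewrite <- H2. constructor; auto.
  - constructor; auto.
  - specialize (IHctyping2_1 G' f Hw Hr). simpl in IHctyping2_1.
    econstructor; eauto.
    apply IHctyping2_2. econstructor; eauto. apply wren_up; auto.
  - rewrite cren_csubst1. econstructor; [apply (IHctyping2_1 G' f Hw Hr)| apply IHctyping2_2; auto].
  - specialize (IHctyping2_1 G' f Hw Hr). simpl in IHctyping2_1.
    constructor. apply IHctyping2_2. econstructor; eauto. apply wren_up; auto.
  - eapply cty_conv; [apply IHctyping2_1; auto| apply cconv_ren; eauto | apply (IHctyping2_2 G' f Hw Hr)].
Qed.

Lemma weaken G t T B : ctyping G t T -> cwf (B :: G) -> ctyping (B :: G) (cren S t) (cren S T).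
Proof.
  intros H Hw. apply (proj2 to2) in H. eapply ren_typ; eauto.
  intros n A Hn. exists A. split; auto. rewrite cren_comp. apply cren_ext. reflexivity.
Qed.

Definition wsub (G' : cctx) (s : nat -> cterm) (G : cctx) :=
  forall n A, nth_error G n = Some A -> ctyping G' (s n) (csubst s (cren (fun k => S n + k) A)).

Lemma wsub_up G' s G A i : wsub G' s G -> cwf G' -> ctyping G' (csubst s A) (CUniv i) ->
  wsub (csubst s A :: G') (cup s) (A :: G).
Proof.
  intros H Hw HA [|n] B Hn; simpl in *.
  - inversion Hn; subst.
    replace (csubst (cup s) (cren (fun k => S k) B)) with (cren (fun k => S (0 + k)) (csubst s B)).
    + constructor; auto. econstructor; eauto.
    + rewrite csubst_cren, cren_csubst. apply csubst_ext. reflexivity.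
  - replace (csubst (cup s) (cren (fun k => S (S (n + k))) B))
      with (cren S (csubst s (cren (fun k => S (n + k)) B))).
    + apply weaken; [apply H; auto| econstructor; eauto].
    + rewrite !csubst_cren, cren_csubst. apply csubst_ext. reflexivity.
Qed.

Lemma subst_typ2 : forall G t T, ctyping2 G t T -> forall G' s, cwf G' -> wsub G' s G ->
  ctyping G' (csubst s t) (csubst s T).
Proof.
  induction 1; intros G' s Hw Hs; [|simpl..].
  - apply Hs; auto.
  - constructor; auto.
  - specialize (IHctyping2_1 G' s Hw Hs). simpl in IHctyping2_1.
    econstructor; eauto.
    apply IHctyping2_2. econstructor; eauto. eapply wsub_up; eauto.
  - rewrite csubst_csubst1. econstructor; [apply (IHctyping2_1 G' s Hw Hs)| apply IHctyping2_2; auto].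
  - specialize (IHctyping2_1 G' s Hw Hs). simpl in IHctyping2_1.
    constructor. apply IHctyping2_2. econstructor; eauto. eapply wsub_up; eauto.
  - eapply cty_conv; [apply IHctyping2_1; auto| apply cconv_subst; eauto | apply (IHctyping2_2 G' s Hw Hs)].
Qed.

Lemma subst_typ G t T G' s : ctyping G t T -> cwf G' -> wsub G' s G ->
  ctyping G' (csubst s t) (csubst s T).
Proof. intros H; apply (proj2 to2) in H; eapply subst_typ2; eauto. Qed.

Scheme cwf2_mut := Induction for cwf2 Sort Prop
with ctyping2_mut := Induction for ctyping2 Sort Prop.
Combined Scheme cwf2_ctyping2_mut from cwf2_mut, ctyping2_mut.

Lemma scoping2 : (forall G, cwf2 G -> forall n A, nth_error G n = Some A -> cclosed (length G - S n) A)
  /\ (forall G t T, ctyping2 G t T -> cclosed (length G) t /\ cclosed (length G) T).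
Proof.
  apply (cwf2_ctyping2_mut (fun G _ => forall n A, nth_error G n = Some A -> cclosed (length G - S n) A)
                      (fun G t T _ => cclosed (length G) t /\ cclosed (length G) T));
  intros; simpl in *.
  - destruct n; discriminate.
  - destruct n; simpl in *.
    + inversion H1; subst. replace (length G - 0) with (length G) by lia. tauto.
    + apply H; auto.
  - assert (n < length G) by (apply nth_error_Some; congruence).
    split; [auto|]. eapply cclosed_ren; [apply H; eauto|]. intros; lia.
  - auto.
  - tauto.
  - destruct H as [HM [HA HB]]; destruct H0 as [HN _]; split; [tauto|].
    eapply cclosed_subst; [exact HB|]. intros [|k] Hk; simpl; auto; lia.
  - simpl in H. tauto.
  - tauto.
Qed.

Lemma scoping : (forall G, cwf G -> forall n A, nth_error G n = Some A -> cclosed (length G - S n) A)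
  /\ (forall G t T, ctyping G t T -> cclosed (length G) t /\ cclosed (length G) T).
Proof.
  split; intros.
  - eapply (proj1 scoping2); eauto. apply (proj1 to2); auto.
  - eapply (proj2 scoping2); eauto. apply (proj2 to2); auto.
Qed.

Lemma inv_wf_nth G n A : cwf G -> nth_error G n = Some A -> cclosed (length G - S n) A.
Proof. intros; eapply (proj1 scoping); eauto. Qed.

Section DInd.
Variable P : dterm -> Prop.
Hypothesis fvar : forall n, P (DVar n).
Hypothesis funiv : forall n, P (DUniv n).
Hypothesis fpi : forall A B, P A -> P B -> P (DPi A B).
Hypothesis fapp : forall A B, P A -> P B -> P (DApp A B).
Hypothesis flab : forall l Ms, Forall P Ms -> P (DLab l Ms).
Fixpoint dterm_ind' (t : dterm) : P t :=
  match t with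
  | DVar n => fvar n
  | DUniv n => funiv n
  | DPi A B => fpi A B (dterm_ind' A) (dterm_ind' B)
  | DApp A B => fapp A B (dterm_ind' A) (dterm_ind' B)
  | DLab l Ms => flab l Ms ((fix go (Ms : list dterm) : Forall P Ms :=
                   match Ms with [] => Forall_nil _ | M :: Ms' => Forall_cons _ (dterm_ind' M) (go Ms') end) Ms)
  end.
End DInd.

Inductive wat (T : ttable) : dterm -> Prop :=
| w_var n : wat T (DVar n)
| w_univ n : wat T (DUniv n)
| w_pi A B : wat T A -> wat T B -> wat T (DPi A B)
| w_app A B : wat T A -> wat T B -> wat T (DApp A B)
| w_lab l Ms A L : tlookup l T = Some (A, L) -> cclosed (length Ms) (CLam A L) ->
    Forall (wat T) Ms -> wat T (DLab l Ms).

Lemma cinst_map f Ms k : k < length Ms -> cinst_sub (map f Ms) k = f (cinst_sub Ms k).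
Proof.
  intros H. unfold cinst_sub. rewrite <- map_rev, length_map.
  rewrite nth_indep with (d' := f (CVar (k - length Ms))).
  - apply map_nth.
  - rewrite length_map, length_rev; auto.
Qed.

Lemma bt_inst T Ms j : btrans T (dinst_sub Ms j) = cinst_sub (map (btrans T) Ms) j.
Proof.
  unfold dinst_sub, cinst_sub. rewrite <- map_rev, length_map.
  change (CVar (j - length Ms)) with (btrans T (DVar (j - length Ms))).
  symmetry; apply map_nth.
Qed.

Lemma wat_ren T : forall t, wat T t -> forall f, wat T (dren f t).
Proof.
  induction t using dterm_ind'; intros Hw f; inversion Hw; subst; simpl; try constructor; auto.
  econstructor; eauto.
  - rewrite length_map; auto.
  - rewrite Forall_map. rewrite Forall_forall in *. intros x Hx. apply H; auto.
Qed.

Lemma wat_subst T : forall t, wat T t -> forall s, (forall n, wat T (s n)) -> wat T (dsubst s t).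
Proof.
  induction t using dterm_ind'; intros Hw s Hs; inversion Hw; subst; simpl; try constructor; auto.
  - apply IHt2; auto. intros [|n]; simpl; [constructor|apply wat_ren; auto].
  - econstructor; eauto.
    + rewrite length_map; auto.
    + rewrite Forall_map. rewrite Forall_forall in *. intros x Hx. apply H; auto.
Qed.

Lemma wat_inst T Ms : Forall (wat T) Ms -> forall n, wat T (dinst_sub Ms n).
Proof.
  intros H n. unfold dinst_sub.
  destruct (Nat.lt_ge_cases n (length (rev Ms))).
  - apply Forall_rev in H. rewrite Forall_forall in H. apply H. apply nth_In; auto.
  - rewrite nth_overflow; auto. constructor.
Qed.

Lemma bt_ren T : forall t, wat T t -> forall f, btrans T (dren f t) = cren f (btrans T t).
Proof.
  induction t using dterm_ind'; intros Hw f; inversion Hw; subst; simpl; try (f_equal; auto; fail).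
  rewrite H2.
  assert (E : map (btrans T) (map (dren f) Ms) = map (cren f) (map (btrans T) Ms)).
  { rewrite !map_map. apply map_ext_in. intros x Hx.
    rewrite Forall_forall in *. apply H; auto. }
  rewrite E. change (CLam (csubst ?s A) (csubst (cup ?s) L)) with (csubst s (CLam A L)). rewrite cren_csubst. simpl in H3.
  eapply csubst_ext_cl with (n := length Ms); [simpl; exact H3|].
  intros k Hk. apply cinst_map. rewrite length_map; auto.
Qed.

Lemma bt_subst T : forall t, wat T t -> forall s, (forall n, wat T (s n)) ->
  btrans T (dsubst s t) = csubst (fun n => btrans T (s n)) (btrans T t).
Proof.
  induction t using dterm_ind'; intros Hw s Hs; inversion Hw; subst; simpl; try (f_equal; auto; fail).
  - f_equal; auto. rewrite IHt2; auto.
    + apply csubst_ext. intros [|n]; simpl; auto. apply bt_ren; auto.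
    + intros [|n]; simpl; [constructor|apply wat_ren; auto].
  - rewrite H2.
    assert (E : map (btrans T) (map (dsubst s) Ms) = map (csubst (fun n => btrans T (s n))) (map (btrans T) Ms)).
    { rewrite !map_map. apply map_ext_in. intros x Hx.
      rewrite Forall_forall in *. apply H; auto. }
    rewrite E. change (CLam (csubst ?s A) (csubst (cup ?s) L)) with (csubst s (CLam A L)). rewrite csubst_comp. simpl in H3.
    eapply csubst_ext_cl with (n := length Ms); [simpl; exact H3|].
    intros k Hk. apply cinst_map. rewrite length_map; auto.
Qed.

Lemma wat_weak T l A L : tlookup l T = None -> forall t, wat T t ->
  wat ((l, A, L) :: T) t /\ btrans ((l, A, L) :: T) t = btrans T t.
Proof.
  intros Hn. induction t using dterm_ind'; intros Hw; inversion Hw; subst; simpl;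
    try (split; [constructor|]; auto; fail).
  - destruct (IHt1 H1), (IHt2 H2). split; [constructor|f_equal]; auto.
  - destruct (IHt1 H1), (IHt2 H2). split; [constructor|f_equal]; auto.
  - assert (Hne : Nat.eqb l0 l = false).
    { destruct (Nat.eqb_spec l0 l); auto. subst. congruence. }
    rewrite Hne, H2.
    assert (F : Forall (fun x => wat ((l, A, L) :: T) x /\ btrans ((l, A, L) :: T) x = btrans T x) Ms).
    { rewrite Forall_forall in *. intros; auto. }
    split.
    + econstructor; eauto. simpl. rewrite Hne; eauto.
      rewrite Forall_forall in *. intros x Hx. apply F; auto.
    + assert (map (btrans ((l, A, L) :: T)) Ms = map (btrans T) Ms) as ->; auto.
      apply map_ext_in. intros x Hx. rewrite Forall_forall in F. apply F; auto.
Qed.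

Definition entry_ok (D : lctx) (e : lentry) : Prop :=
  let T := btable D in
  wat T (ldom e) /\ wat T (lbody e) /\ wat T (lcod e) /\ Forall (wat T) (lparams e) /\
  cclosed (length (lparams e)) (CLam (btrans T (ldom e)) (btrans T (lbody e))) /\
  cwf (bctx D (rev (lparams e))) /\
  ctyping (bctx D (rev (lparams e))) (CLam (btrans T (ldom e)) (btrans T (lbody e)))
          (CPi (btrans T (ldom e)) (btrans T (lcod e))).

Fixpoint good (D : lctx) : Prop :=
  match D with
  | [] => True
  | e :: D' => good D' /\ tlookup (lname e) (btable D') = None /\ entry_ok D' e
  end.

Definition transfer (D2 D : lctx) := forall t, wat (btable D2) t ->
  wat (btable D) t /\ btrans (btable D) t = btrans (btable D2) t.

Lemma lookup_lemma : forall D e, good D -> In e D -> exists D2, good (e :: D2) /\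
  tlookup (lname e) (btable D) = Some (btrans (btable D2) (ldom e), btrans (btable D2) (lbody e)) /\
  transfer D2 D.
Proof.
  induction D as [|e' D IH]; intros e Hg Hin; [destruct Hin|].
  destruct Hg as [Hg [Hf Hok]].
  destruct Hin as [<-|Hin].
  - exists D. split; [simpl; auto|]. split.
    + simpl. rewrite Nat.eqb_refl. reflexivity.
    + intros t Ht. apply wat_weak; auto.
  - destruct (IH e Hg Hin) as [D2 [G2 [L2 T2]]]. exists D2. split; auto. split.
    + simpl. destruct (Nat.eqb_spec (lname e) (lname e')).
      * rewrite e0 in L2. congruence.
      * auto.
    + intros t Ht. destruct (T2 t Ht). destruct (wat_weak _ _ (btrans (btable D) (ldom e')) (btrans (btable D) (lbody e')) Hf t H). split; auto.
      simpl. congruence.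
Qed.

Lemma fresh_lookup : forall D l, ~ (exists e', In e' D /\ lname e' = l) -> tlookup l (btable D) = None.
Proof.
  induction D as [|e D IH]; intros l H; simpl; auto.
  destruct (Nat.eqb_spec l (lname e)).
  - exfalso. apply H. exists e. split; auto. left; auto.
  - apply IH. intros [e2 [H1 H2]]. apply H. exists e2. split; auto. right; auto.
Qed.

Lemma F2_rev {X} (R : X -> X -> Prop) l1 l2 : Forall2 R l1 l2 -> Forall2 R (rev l1) (rev l2).
Proof. induction 1; simpl; auto. apply Forall2_app; auto. Qed.

Lemma F2_nth {X} (R : X -> X -> Prop) : forall l1 l2, Forall2 R l1 l2 -> forall d n, R d d ->
  R (nth n l1 d) (nth n l2 d).
Proof. induction 1; intros d [|n] Hd; simpl; auto. Qed.

Lemma cinst_conv l1 l2 : Forall2 cconv l1 l2 -> forall n, cconv (cinst_sub l1 n) (cinst_sub l2 n).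
Proof.
  intros H n. unfold cinst_sub. rewrite (Forall2_length H).
  apply F2_nth; [apply F2_rev; auto| apply cconv_refl].
Qed.

Lemma cinst_snoc Ms N k :
  csubst (fun n => match n with 0 => N | S k => CVar k end) (cup (cinst_sub Ms) k)
  = cinst_sub (Ms ++ [N]) k.
Proof.
  unfold cinst_sub. rewrite rev_unit, length_app. simpl. destruct k as [|j]; simpl; auto.
  rewrite csubst_cren, csubst_id by reflexivity.
  f_equal. f_equal. rewrite Nat.add_1_r. reflexivity.
Qed.

Section Steps.
Variable D : lctx.
Hypothesis HD : good D.
Let T := btable D.

Lemma lab_fold s A L : CLam (csubst s A) (csubst (cup s) L) = csubst s (CLam A L).
Proof. reflexivity. Qed.

Lemma step_conv : forall t u, dstep D t u -> wat T t -> wat T u /\ cconv (btrans T t) (btrans T u).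
Proof.
  induction 1; intros Hw.
  - inversion Hw; subst. inversion H3; subst.
    destruct (lookup_lemma D e HD H) as [D2 [[G2 [_ Hok]] [Hl Htr]]].
    fold T in Hl. rewrite Hl in H5. inversion H5; subst. clear H5.
    destruct Hok as [_ [Hb _]]. destruct (Htr _ Hb) as [Hb' Hbe].
    assert (Hs : forall n, wat T (dinst_sub (Ms ++ [N]) n)).
    { apply wat_inst. apply Forall_app; split; auto. }
    split.
    + apply wat_subst; auto.
    + unfold dinst. rewrite bt_subst; auto. simpl btrans at 1. fold T. rewrite Hl.
      eapply cconv_trans; [apply cconv_step; apply cstep_beta|].
      fold T in Hbe. rewrite Hbe. unfold csubst1. rewrite csubst_comp.
      simpl in H6. destruct H6 as [_ Hc].
      erewrite csubst_ext_cl; [apply cconv_refl| exact Hc|].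
      intros k Hk. rewrite cinst_snoc. rewrite bt_inst, map_app. reflexivity.
  - inversion Hw; subst. destruct (IHdstep H2). split; [constructor; auto|].
    simpl. apply cconv_pi; auto using cconv_refl.
  - inversion Hw; subst. destruct (IHdstep H3). split; [constructor; auto|].
    simpl. apply cconv_pi; auto using cconv_refl.
  - inversion Hw; subst. destruct (IHdstep H2). split; [constructor; auto|].
    simpl. apply cconv_app; auto using cconv_refl.
  - inversion Hw; subst. destruct (IHdstep H3). split; [constructor; auto|].
    simpl. apply cconv_app; auto using cconv_refl.
  - inversion Hw; subst. apply Forall_app in H4. destruct H4 as [F1 F2]. inversion F2; subst.
    destruct (IHdstep H4) as [Hw' Hc]. split.
    + econstructor; eauto.
      * rewrite !length_app in *. simpl in *. auto.
      * apply Forall_app; split; auto.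
    + simpl. fold T. rewrite H2. rewrite !lab_fold. apply cconv_subst_pw. apply cinst_conv.
      rewrite !map_app. apply Forall2_app.
      * clear. induction Ms1; simpl; constructor; auto using cconv_refl.
      * simpl. constructor; auto. clear. induction Ms2; simpl; constructor; auto using cconv_refl.
Qed.

Lemma red_conv t u : dred D t u -> wat T t -> wat T u /\ cconv (btrans T t) (btrans T u).
Proof.
  induction 1; intros Hw.
  - apply step_conv; auto.
  - split; auto using cconv_refl.
  - destruct (IHclos_refl_trans1 Hw). destruct (IHclos_refl_trans2 H1).
    split; eauto using cconv_trans.
Qed.

Lemma eta_case L M M' e Ns : dred D L (DLab (lname e) Ns) -> dred D M M' -> In e D ->
  (wat T (dsubst (dup (dinst_sub Ns)) (lbody e)) -> wat T (DApp (dren S M') (DVar 0)) ->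
   cconv (btrans T (dsubst (dup (dinst_sub Ns)) (lbody e))) (btrans T (DApp (dren S M') (DVar 0)))) ->
  wat T L -> wat T M -> cconv (btrans T L) (btrans T M).
Proof.
  intros H1 H2 Hin IH HL HM.
  destruct (red_conv _ _ H1 HL) as [Wl Cl]. destruct (red_conv _ _ H2 HM) as [Wm Cm].
  inversion Wl; subst.
  destruct (lookup_lemma D e HD Hin) as [D2 [[G2 [_ Hok]] [Hl Htr]]].
  fold T in Hl. rewrite Hl in H3. inversion H3; subst. clear H3.
  destruct Hok as [_ [Hb _]]. destruct (Htr _ Hb) as [Hb' Hbe].
  assert (Hs : forall n, wat T (dup (dinst_sub Ns) n)).
  { intros [|n]; simpl; [constructor|]. apply wat_ren, wat_inst; auto. }
  specialize (IH (wat_subst _ _ Hb' _ Hs) (w_app _ _ _ (wat_ren _ _ Wm _) (w_var _ _))).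
  rewrite bt_subst in IH; auto. simpl in IH. rewrite bt_ren in IH; auto.
  fold T in Hbe. rewrite Hbe in IH.
  erewrite csubst_ext with (r := cup (cinst_sub (map (btrans T) Ns))) in IH.
  2:{ intros [|n]; simpl; auto. rewrite bt_ren by (apply wat_inst; auto). rewrite bt_inst. reflexivity. }
  eapply cconv_trans; [exact Cl|]. simpl. fold T. rewrite Hl.
  eapply cconv_trans; [apply cconv_lam; [apply cconv_refl| exact IH]|].
  eapply cconv_trans; [apply cconv_step; apply cstep_eta|]. apply cconv_sym; auto.
Qed.

Lemma deq_conv a b : deq D a b -> wat T a -> wat T b -> cconv (btrans T a) (btrans T b).
Proof.
  induction 1; intros Ha Hb.
  - destruct (red_conv _ _ H Ha), (red_conv _ _ H0 Hb). eauto using cconv_trans, cconv_sym.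
  - eapply eta_case; eauto.
  - apply cconv_sym. eapply eta_case; eauto.
Qed.
End Steps.

Scheme dwf_mut := Induction for dwf Sort Prop
with dtyping_mut := Induction for dtyping Sort Prop.
Combined Scheme dwf_dtyping_mut from dwf_mut, dtyping_mut.

Lemma Forall_firstn {X} (P : X -> Prop) k l : Forall P l -> Forall P (firstn k l).
Proof.
  intros H. rewrite <- (firstn_skipn k l) in H. apply Forall_app in H. tauto.
Qed.

Lemma cinst_firstn l k j : k <= length l -> j < k ->
  cinst_sub (firstn k l) j = cinst_sub l (length l - k + j).
Proof.
  intros Hk Hj. unfold cinst_sub.
  assert (Lf : length (firstn k l) = k) by (rewrite length_firstn; lia).
  rewrite !rev_nth by lia. rewrite Lf, nth_firstn.
  replace (Nat.ltb (k - S j) k) with true by (symmetry; apply Nat.ltb_lt; lia).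
  replace (length l - S (length l - k + j)) with (k - S j) by lia.
  apply nth_indep. lia.
Qed.

Definition Pwf (D : lctx) (G : dctx) := good D /\ Forall (wat (btable D)) G /\ cwf (bctx D G).
Definition Pty (D : lctx) (G : dctx) M A := good D /\ Forall (wat (btable D)) G /\ cwf (bctx D G) /\
  wat (btable D) M /\ wat (btable D) A /\ ctyping (bctx D G) (bterm D M) (bterm D A).

Ltac split6 := refine (conj _ (conj _ (conj _ (conj _ (conj _ _))))).

Lemma main : (forall D G, dwf D G -> Pwf D G) /\ (forall D G M A, dtyping D G M A -> Pty D G M A).
Proof.
  apply (dwf_dtyping_mut (fun D G _ => Pwf D G) (fun D G M A _ => Pty D G M A));
  unfold Pwf, Pty; intros.
  - simpl; repeat split; auto. constructor.
  -
    destruct H as [Hg [HG [Hw [HwP [_ HtP]]]]].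
    destruct H0 as [_ [_ [_ [HwL [HwB HtL]]]]].
    inversion HwP; subst.
    split; [|split; [constructor|constructor]].
    simpl. split; [auto|]. split; [apply fresh_lookup; auto|].
    assert (HtL' : ctyping (bctx D (rev (lparams e)))
               (CLam (btrans (btable D) (ldom e)) (btrans (btable D) (lbody e)))
               (CPi (btrans (btable D) (ldom e)) (btrans (btable D) (lcod e)))).
    { apply cty_lam. exact HtL. }
    unfold entry_ok. refine (conj _ (conj _ (conj _ (conj _ (conj _ (conj _ _)))))); auto.
    + apply Forall_rev in HG. rewrite rev_involutive in HG. auto.
    + destruct (proj2 scoping _ _ _ HtL') as [Hc _].
      unfold bctx in Hc. rewrite length_map, length_rev in Hc. exact Hc.
  -
    destruct H as [Hg [HG Hw]]. destruct H0 as [_ [_ [_ [HA [_ Ht]]]]].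
    repeat split; auto. simpl. econstructor; eauto.
  -
    destruct H as [Hg [HG Hw]]. split6; auto.
    + constructor.
    + apply wat_ren. rewrite Forall_forall in HG. eapply HG, nth_error_In; eauto.
    + unfold bterm. rewrite bt_ren.
      * simpl. constructor; auto. unfold bctx. rewrite nth_error_map, e. reflexivity.
      * rewrite Forall_forall in HG. eapply HG, nth_error_In; eauto.
  -
    destruct H as [Hg [HG Hw]]. split6; auto; try constructor. auto.
  -
    destruct H as [Hg [HG [Hw [HA [_ HtA]]]]].
    destruct H0 as [_ [_ [_ [HB [_ HtB]]]]].
    split6; auto; try constructor; auto.
    all: try (unfold bterm; simpl; econstructor; eauto).
  -
    destruct H as [Hg [HG [Hw [HM [HP HtM]]]]].
    destruct H0 as [_ [_ [_ [HN [HA HtN]]]]].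
    inversion HP; subst.
    assert (Hs : forall n, wat (btable D) (match n with 0 => N | S k => DVar k end)).
    { intros [|n]; auto. constructor. }
    split6; auto.
    + constructor; auto.
    + apply wat_subst; auto.
    + unfold bterm, dsubst1. rewrite bt_subst; auto.
      replace (csubst (fun n => btrans (btable D) (match n with 0 => N | S k => DVar k end))
                 (btrans (btable D) B))
        with (csubst1 (btrans (btable D) N) (btrans (btable D) B)).
      * econstructor; eauto.
      * apply csubst_ext. intros [|n]; reflexivity.
  -
    destruct H as [Hg [HG [Hw [HM [HA HtM]]]]].
    destruct H0 as [_ [_ [_ [HB [_ HtB]]]]].
    split6; auto.
    eapply cty_conv; eauto. apply deq_conv; auto.
  -
    destruct H as [Hg [HG Hw]].
    rename i into Hin, e0 into Hlen.
    destruct (lookup_lemma D e Hg Hin) as [D2 [[G2 [_ Hok]] [Hl Htr]]].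
    destruct Hok as [Wd [Wb [Wc [Wp [Hcl [Hwf2 Hty]]]]]].
    set (T := btable D) in *.
    set (A0 := btrans (btable D2) (ldom e)) in *.
    set (L0 := btrans (btable D2) (lbody e)) in *.
    set (B0 := btrans (btable D2) (lcod e)) in *.
    assert (WMs : Forall (wat T) Ms).
    { rewrite Forall_forall. intros x Hx. destruct (In_nth _ _ (DVar 0) Hx) as [k [Hk <-]].
      destruct (H0 k Hk) as [_ [_ [_ [W _]]]]. exact W. }
    assert (WPi : wat T (DPi (ldom e) (lcod e))).
    { constructor; [apply (Htr _ Wd)|apply (Htr _ Wc)]. }
    split6; auto.
    + econstructor; eauto. rewrite Hlen. exact Hcl.
    + apply wat_subst; auto. apply wat_inst; auto.
    + assert (E1 : bterm D (DLab (lname e) Ms) = csubst (cinst_sub (map (btrans T) Ms)) (CLam A0 L0)).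
      { unfold bterm. simpl. fold T. rewrite Hl. reflexivity. }
      assert (E2 : bterm D (dinst Ms (DPi (ldom e) (lcod e))) = csubst (cinst_sub (map (btrans T) Ms)) (CPi A0 B0)).
      { unfold bterm, dinst. fold T. rewrite bt_subst; auto.
        - rewrite (csubst_ext _ _ (cinst_sub (map (btrans T) Ms))) by (intros; apply bt_inst).
          simpl btrans. destruct (Htr _ Wd) as [_ E3]. destruct (Htr _ Wc) as [_ E4]. fold T in E3, E4.
          rewrite E3, E4. reflexivity.
        - apply wat_inst; auto. }
      rewrite E1, E2. eapply subst_typ; [exact Hty| exact Hw|].
      intros n X Hn. unfold bctx in Hn. rewrite nth_error_map in Hn.
      destruct (nth_error (rev (lparams e)) n) as [dd|] eqn:En; [|discriminate].
      simpl in Hn. injection Hn as <-.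
      assert (Hnl : n < length (lparams e)).
      { rewrite <- length_rev. apply nth_error_Some. congruence. }
      set (k := length (lparams e) - S n).
      assert (Hd : dd = nth k (lparams e) (DVar 0)).
      { apply nth_error_nth with (d := DVar 0) in En. rewrite rev_nth in En by lia. auto. }
      assert (Hkl : k < length Ms) by (unfold k; lia).
      destruct (H0 k Hkl) as [_ [_ [_ [_ [_ Htk]]]]].
      assert (Wk : wat (btable D2) (nth k (lparams e) (DVar 0))).
      { rewrite Forall_forall in Wp. apply Wp. apply nth_In. unfold k; lia. }
      assert (Ecl : cclosed k (btrans (btable D2) dd)).
      { pose proof (inv_wf_nth _ n (bterm D2 dd) Hwf2) as Hc. unfold bctx in Hc.
        rewrite nth_error_map, En in Hc. specialize (Hc eq_refl).
        rewrite length_map, length_rev in Hc. exact Hc. }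
      replace (cinst_sub (map (btrans T) Ms) n) with (bterm D (nth k Ms (DVar 0))).
      * replace (csubst (cinst_sub (map (btrans T) Ms)) (cren (fun j => S n + j) (bterm D2 dd)))
          with (bterm D (dinst (firstn k Ms) (nth k (lparams e) (DVar 0)))); [exact Htk|].
        unfold bterm, dinst. fold T. rewrite bt_subst.
        -- rewrite csubst_cren. destruct (Htr _ Wk) as [_ E5]. fold T in E5. rewrite E5, <- Hd.
           apply csubst_ext_cl with (n := k); auto.
           intros j Hj. rewrite bt_inst, <- firstn_map, cinst_firstn.
           ++ rewrite length_map. f_equal. unfold k in *. lia.
           ++ rewrite length_map. lia.
           ++ auto.
        -- apply (Htr _ Wk).
        -- apply wat_inst. apply Forall_firstn; auto.
      * unfold cinst_sub, bterm. fold T. rewrite rev_nth by (rewrite length_map; lia).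
        rewrite length_map, Hlen. fold k.
        rewrite nth_indep with (d' := btrans T (DVar 0)) by (rewrite length_map; lia).
        rewrite map_nth. reflexivity.
Qed.

Theorem lemma3p22 : forall (D : lctx) (G : dctx) (M A : dterm),
  dtyping D G M A -> ctyping (bctx D G) (bterm D M) (bterm D A).
Proof.
  intros D G M A H. apply (proj2 main) in H. unfold Pty in H. tauto.
Qed.
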